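(* Let $\omega$ be a nondegenerate skew-symmetric $2$-cocycle on a Leibniz algebra $(A,\circ_A)$, and define multiplications $\succ_A,\prec_A$ on $A$ by $$\omega(x\succ_A y,z)=\omega(y,x\circ_A z),\qquad \omega(x\prec_A y,z)=-\omega(x,y\circ_A z+z\circ_A y),\quad\forall x,y,z\in A.$$ Then $(A,\succ_A,\prec_A)$ is an anti-pre-Leibniz algebra (with $x\succ_A y+x\prec_A y=x\circ_A y$). Moreover, $(-\mathcal L_{\succ_A},-\mathcal R_{\prec_A},A)$ and $(\mathcal L^*_{\circ_A},-\mathcal L^*_{\circ_A}-\mathcal R^*_{\circ_A},A^* )$ are equivalent representations of $(A,\circ_A)$ (via $\omega^\natural$), and $(\mathcal L_{\circ_A},\mathcal R_{\circ_A},A)$ and $(-\mathcal L^*_{\succ_A},\mathcal L^*_{\succ_A}+\mathcal R^*_{\prec_A},A^* )$ are equivalent representations of $(A,\circ_A)$ (via $(\omega^\natural)^*$).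
   Context: All vector spaces are finite-dimensional over a field $\mathbb K$ of characteristic zero. For a multiplication $\ast$, $\mathcal L_\ast(x)y=x\ast y$, $\mathcal R_\ast(x)y=y\ast x$; for $f:A\to\mathrm{End}(V)$, $f^*:A\to\mathrm{End}(V^* )$ is $\langle f^*(x)u^*,v\rangle=-\langle u^*,f(x)v\rangle$. For a bilinear form $\omega$, $\omega^\natural:A\to A^*$ is $\langle\omega^\natural(u),v\rangle=\omega(u,v)$. A Leibniz algebra is a vector space $A$ with a multiplication $\circ_A$ satisfying $x\circ_A(y\circ_A z)=(x\circ_A y)\circ_A z+y\circ_A(x\circ_A z)$. A representation of $(A,\circ_A)$ is a triple $(l,r,V)$ with linear maps $l,r:A\to\mathrm{End}(V)$ such that for all $x,y\in A,v\in V$: $l(x\circ_A y)v=l(x)l(y)v-l(y)l(x)v$; $r(x\circ_A y)v=l(x)r(y)v-r(y)l(x)v$; $r(y)l(x)v=-r(y)r(x)v$. Two representations $(l,r,V)$, $(l',r',V')$ are equivalent if there is a linear isomorphism $\phi:V\to V'$ with $\phi l(x)=l'(x)\phi$ and $\phi r(x)=r'(x)\phi$ for all $x$. A bilinear form $\omega$ on $(A,\circ_A)$ is a $2$-cocycle if $\omega(z,x\circ_A y)=\omega(x,y\circ_A z+z\circ_A y)-\omega(y,x\circ_A z)$ for all $x,y,z$. An anti-pre-Leibniz algebra is a vector space $A$ with multiplications $\succ_A,\prec_A$ such that, with $x\circ y=x\succ_A y+x\prec_A y$, for all $x,y,z$: (AL1) $(x\circ y)\prec_A z=x\succ_A(y\circ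 z)-y\succ_A(x\circ z)$; (AL2) $(x\circ y)\succ_A z=y\succ_A(x\succ_A z)-x\succ_A(y\succ_A z)$; (AL3) $x\prec_A(y\circ z)=(y\succ_A x)\prec_A z-y\succ_A(x\prec_A z)$; (AL4) $(x\succ_A y)\prec_A z=-(y\prec_A x)\prec_A z$. *)

(* Defs.v *)
From HB Require Import structures.
From mathcomp Require Import all_boot all_order all_algebra.
Set Implicit Arguments. Unset Strict Implicit. Unset Printing Implicit Defensive.
Import GRing.Theory.
Local Open Scope ring_scope.

(* Conventions: A is a finite-dimensional vector space over K, modelled as a
   [vectType K].  Its dual A^* is ['Hom(A, K^o)] (linear forms), with pairing
   <u*, v> := u* v. *)

Section Defs.
Variable K : fieldType.

Definition dual (V : vectType K) := 'Hom(V, K^o).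

Definition Lmul (A : vectType K) (m : A -> A -> A) (x : A) : 'End(A) :=
  linfun (m x).
Definition Rmul (A : vectType K) (m : A -> A -> A) (x : A) : 'End(A) :=
  linfun (fun y => m y x).

Definition dualrep (A V : vectType K) (f : A -> 'End(V)) (x : A)
  : 'End(dual V) :=
  linfun (fun u : dual V => - (u \o f x)%VF).

Definition bilinear_mul (A : vectType K) (m : A -> A -> A) :=
  (forall (a : K) x y z, m (a *: x + y) z = a *: m x z + m y z) /\
  (forall (a : K) x y z, m z (a *: x + y) = a *: m z x + m z y).

Definition bilinear_form (A : vectType K) (w : A -> A -> K) :=
  (forall (a : K) x y z, w (a *: x + y) z = a * w x z + w y z) /\
  (forall (a : K) x y z, w z (a *: x + y) = a * w z x + w z y).

Definition is_Leibniz (A : vectType K) (m : A -> A -> A) :=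
  bilinear_mul m /\
  forall x y z, m x (m y z) = m (m x y) z + m y (m x z).

Definition is_rep (A : vectType K) (m : A -> A -> A) (V : vectType K)
  (l r : A -> 'End(V)) :=
  linear l /\ linear r /\
  forall x y (v : V),
    [/\ l (m x y) v = l x (l y v) - l y (l x v),
        r (m x y) v = l x (r y v) - r y (l x v) &
        r y (l x v) = - r y (r x v)].

Definition equiv_via (A V V' : vectType K) (phi : 'Hom(V, V'))
  (l r : A -> 'End(V)) (l' r' : A -> 'End(V')) :=
  bijective phi /\
  forall x (v : V), phi (l x v) = l' x (phi v) /\ phi (r x v) = r' x (phi v).

Definition is_2cocycle (A : vectType K) (m : A -> A -> A) (w : A -> A -> K) :=
  forall x y z, w z (m x y) = w x (m y z + m z y) - w y (m x z).

Definition skew_symm_form (A : vectType K) (w : A -> A -> K) :=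
  forall x y, w x y = - w y x.

Definition nondeg_form (A : vectType K) (w : A -> A -> K) :=
  forall x, (forall y, w x y = 0) -> x = 0.

Definition natural (A : vectType K) (w : A -> A -> K) : 'Hom(A, dual A) :=
  linfun (fun u : A => (linfun (w u : A -> K^o) : dual A)).

(* (omega^natural)^* : A^** -> A^*, composed with the canonical
   identification A = A^**: v |-> (u |-> <omega^natural(u), v> = omega(u, v)) *)
Definition natural_dual (A : vectType K) (w : A -> A -> K) : 'Hom(A, dual A) :=
  linfun (fun v : A => (linfun ((fun u => w u v) : A -> K^o) : dual A)).

Definition anti_pre_Leibniz (A : vectType K) (succ prec : A -> A -> A) :=
  let circ x y := succ x y + prec x y in
  bilinear_mul succ /\ bilinear_mul prec /\
  forall x y z,
    [/\ prec (circ x y) z = succ x (circ y z) - succ y (circ x z),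
        succ (circ x y) z = succ y (succ x z) - succ x (succ y z),
        prec x (circ y z) = prec (succ y x) z - succ y (prec x z) &
        prec (succ x y) z = - prec (prec y x) z].

End Defs.

(* Main.v *)
Require Import Defs.
From HB Require Import structures.
From mathcomp Require Import all_boot all_order all_algebra.
From mathcomp Require Import ring.
Import GRing.Theory.
Local Open Scope ring_scope.

Lemma lfunE_gen (K : fieldType) (U V : vectType K) (g : U -> V) :
  linear g -> forall v, linfun g v = g v.
Proof.
move=> lg v.
pose gL : {linear U -> V} := HB.pack g (GRing.isLinear.Build K U V *:%R g lg).
exact: (lfunE gL v).
Qed.

Lemma dimhom (K : fieldType) (A : vectType K) : dim 'Hom(A, K^o) = dim A.
Proof. have -> : dim 'Hom(A, K^o) = (dim A * dim K^o)%N by []. by rewrite muln1. Qed.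

Lemma two0 (K : fieldType) (Kchar0 : [pchar K] =i pred0) : (2%:R : K) != 0.
Proof. rewrite natf_neq0_pchar. apply/andP; split=> //=. by rewrite /= inE /= Kchar0. Qed.

Lemma al1_aux (K : fieldType) (A : vectType K) (circ : A -> A -> A) (omega : A -> A -> K)
  (two : (2%:R : K) != 0)
  (hLe : forall x y z, circ x (circ y z) = circ (circ x y) z + circ y (circ x z))
  (wDr : forall a u v, omega a (u + v) = omega a u + omega a v)
  (hc : forall x y z, omega z (circ x y) = omega x (circ y z + circ z y) - omega y (circ x z))
  (hs : forall x y, omega x y = - omega y x) x y z w :
  - (omega (circ x y) (circ z w) + omega (circ x y) (circ w z)) - (omega (circ y z) (circ x w) - omega (circ x z) (circ y w)) = 0.
Proof.
apply: (mulfI two); rewrite mulr0.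
have e0 : omega x (circ y (circ z w)) - (omega x (circ (circ y z) w) + omega x (circ z (circ y w))) = 0 by rewrite (hLe y z w) wDr subrr.
have e1 : omega x (circ y (circ w z)) - (omega x (circ (circ y w) z) + omega x (circ w (circ y z))) = 0 by rewrite (hLe y w z) wDr subrr.
have e2 : omega y (circ x (circ z w)) - (omega y (circ (circ x z) w) + omega y (circ z (circ x w))) = 0 by rewrite (hLe x z w) wDr subrr.
have e3 : omega y (circ x (circ w z)) - (omega y (circ (circ x w) z) + omega y (circ w (circ x z))) = 0 by rewrite (hLe x w z) wDr subrr.
have e4 : omega y (circ z (circ w x)) - (omega y (circ (circ z w) x) + omega y (circ w (circ z x))) = 0 by rewrite (hLe z w x) wDr subrr.
have e5 : omega y (circ w (circ z x)) - (omega y (circ (circ w z) x) + omega y (circ z (circ w x))) = 0 by rewrite (hLe w z x) wDr subrr.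
have e6 : omega z (circ x (circ y w)) - (omega z (circ (circ x y) w) + omega z (circ y (circ x w))) = 0 by rewrite (hLe x y w) wDr subrr.
have e7 : omega z (circ y (circ x w)) - (omega z (circ (circ y x) w) + omega z (circ x (circ y w))) = 0 by rewrite (hLe y x w) wDr subrr.
have e8 : omega w (circ x (circ y z)) - (omega w (circ (circ x y) z) + omega w (circ y (circ x z))) = 0 by rewrite (hLe x y z) wDr subrr.
have e9 : omega w (circ y (circ x z)) - (omega w (circ (circ y x) z) + omega w (circ x (circ y z))) = 0 by rewrite (hLe y x z) wDr subrr.
have e10 : omega (circ y w) (circ x z) - (omega x (circ z (circ y w)) + omega x (circ (circ y w) z) - omega z (circ x (circ y w))) = 0 by rewrite (hc x z (circ y w)) wDr subrr.
have e11 : omega (circ y z) (circ x w) - (omega x (circ w (circ y z)) + omega x (circ (circ y z) w) - omega w (circ x (circ y z))) = 0 by rewrite (hc x w (circ y z)) wDr subrr.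
have e12 : omega (circ z w) (circ y x) - (omega y (circ x (circ z w)) + omega y (circ (circ z w) x) - omega x (circ y (circ z w))) = 0 by rewrite (hc y x (circ z w)) wDr subrr.
have e13 : omega (circ w z) (circ y x) - (omega y (circ x (circ w z)) + omega y (circ (circ w z) x) - omega x (circ y (circ w z))) = 0 by rewrite (hc y x (circ w z)) wDr subrr.
have e14 : omega (circ x w) (circ y z) - (omega y (circ z (circ x w)) + omega y (circ (circ x w) z) - omega z (circ y (circ x w))) = 0 by rewrite (hc y z (circ x w)) wDr subrr.
have e15 : omega (circ x z) (circ y w) - (omega y (circ w (circ x z)) + omega y (circ (circ x z) w) - omega w (circ y (circ x z))) = 0 by rewrite (hc y w (circ x z)) wDr subrr.
have e16 : omega (circ x y) (circ z w) - (omega z (circ w (circ x y)) + omega z (circ (circ x y) w) - omega w (circ z (circ x y))) = 0 by rewrite (hc z w (circ x y)) wDr subrr.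
have e17 : omega (circ y x) (circ z w) - (omega z (circ w (circ y x)) + omega z (circ (circ y x) w) - omega w (circ z (circ y x))) = 0 by rewrite (hc z w (circ y x)) wDr subrr.
have e18 : omega (circ x y) (circ w z) - (omega w (circ z (circ x y)) + omega w (circ (circ x y) z) - omega z (circ w (circ x y))) = 0 by rewrite (hc w z (circ x y)) wDr subrr.
have e19 : omega (circ y x) (circ w z) - (omega w (circ z (circ y x)) + omega w (circ (circ y x) z) - omega z (circ w (circ y x))) = 0 by rewrite (hc w z (circ y x)) wDr subrr.
have e20 : omega (circ w z) (circ y x) + omega (circ y x) (circ w z) = 0 by rewrite (hs (circ w z) (circ y x)) addNr.
have e21 : omega (circ z w) (circ y x) + omega (circ y x) (circ z w) = 0 by rewrite (hs (circ z w) (circ y x)) addNr.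
have e22 : omega (circ y w) (circ x z) + omega (circ x z) (circ y w) = 0 by rewrite (hs (circ y w) (circ x z)) addNr.
have e23 : omega (circ x w) (circ y z) + omega (circ y z) (circ x w) = 0 by rewrite (hs (circ x w) (circ y z)) addNr.
have E : 2%:R * (- (omega (circ x y) (circ z w) + omega (circ x y) (circ w z)) - (omega (circ y z) (circ x w) - omega (circ x z) (circ y w))) = (1) * (omega x (circ y (circ z w)) - (omega x (circ (circ y z) w) + omega x (circ z (circ y w)))) + (1) * (omega x (circ y (circ w z)) - (omega x (circ (circ y w) z) + omega x (circ w (circ y z)))) + (-1) * (omega y (circ x (circ z w)) - (omega y (circ (circ x z) w) + omega y (circ z (circ x w)))) + (-1) * (omega y (circ x (circ w z)) - (omega y (circ (circ x w) z) + omega y (circ w (circ x z)))) + (1) * (omega y (circ z (circ w x)) - (omega y (circ (circ z w) x) + omega y (circ w (circ z x)))) + (1) * (omega y (circ w (circ z x)) - (omega y (circ (circ w z) x) + omega y (circ z (circ w x)))) + (2) * (omega z (circ x (circ y w)) - (omega z (circ (circ x y) w) + omega z (circ y (circ x w)))) + (1) * (omega z (circ y (circ x w)) - (omega z (circ (circ y x) w) + omega z (circ x (circ y w)))) + (2) * (omega w (circ x (circ y z)) - (omega w (circ (circ x y) z) + omega w (circ y (circ x z)))) + (1) * (omega w (circ y (circ x z)) - (omega w (circ (circ y x) z) + omega w (circ x (circ y z)))) + (-1) * (omega (circ y w) (circ x z) - (omega x (circ z (circ y w)) + omega x (circ (circ y w) z) - omega z (circ x (circ y w)))) + (-1) * (omega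 (circ y z) (circ x w) - (omega x (circ w (circ y z)) + omega x (circ (circ y z) w) - omega w (circ x (circ y z)))) + (-1) * (omega (circ z w) (circ y x) - (omega y (circ x (circ z w)) + omega y (circ (circ z w) x) - omega x (circ y (circ z w)))) + (-1) * (omega (circ w z) (circ y x) - (omega y (circ x (circ w z)) + omega y (circ (circ w z) x) - omega x (circ y (circ w z)))) + (1) * (omega (circ x w) (circ y z) - (omega y (circ z (circ x w)) + omega y (circ (circ x w) z) - omega z (circ y (circ x w)))) + (1) * (omega (circ x z) (circ y w) - (omega y (circ w (circ x z)) + omega y (circ (circ x z) w) - omega w (circ y (circ x z)))) + (-2) * (omega (circ x y) (circ z w) - (omega z (circ w (circ x y)) + omega z (circ (circ x y) w) - omega w (circ z (circ x y)))) + (-1) * (omega (circ y x) (circ z w) - (omega z (circ w (circ y x)) + omega z (circ (circ y x) w) - omega w (circ z (circ y x)))) + (-2) * (omega (circ x y) (circ w z) - (omega w (circ z (circ x y)) + omega w (circ (circ x y) z) - omega z (circ w (circ x y)))) + (-1) * (omega (circ y x) (circ w z) - (omega w (circ z (circ y x)) + omega w (circ (circ y x) z) - omega z (circ w (circ y x)))) + (1) * (omega (circ w z) (circ y x) + omega (circ y x) (circ w z)) + (1) * (omega (circ z w) (circ y x) + omega (circ y x) (circ z w)) + (1) * (omega (circ y w) (circ x z) + omega (circ x z) (circ y w)) + (-1) * (omega (circ x w) (circ y z) + omega (circ y z) (circ x w)) by ring.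
rewrite E e0 e1 e2 e3 e4 e5 e6 e7 e8 e9 e10 e11 e12 e13 e14 e15 e16 e17 e18 e19 e20 e21 e22 e23; ring.
Qed.

Lemma close_lin (K : fieldType) (G a b : K) : G = 0 -> a - b = G -> a = b.
Proof. by move=> -> /eqP; rewrite subr_eq0 => /eqP. Qed.

Lemma LmulE (K : fieldType) (A : vectType K) (m : A -> A -> A) :
  bilinear_mul m -> forall x v, Lmul m x v = m x v.
Proof. by move=> [_ hr] x v; rewrite /Lmul lfunE_gen // => a y z; exact: hr. Qed.

Lemma RmulE (K : fieldType) (A : vectType K) (m : A -> A -> A) :
  bilinear_mul m -> forall x v, Rmul m x v = m v x.
Proof. by move=> [hl _] x v; rewrite /Rmul lfunE_gen // => a y z; exact: hl. Qed.

Lemma dualrepE (K : fieldType) (A V : vectType K) (f : A -> 'End(V)) x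
  (u : dual V) v : dualrep f x u v = - u (f x v).
Proof.
rewrite /dualrep lfunE_gen; first by rewrite opp_lfunE comp_lfunE.
move=> a u1 u2; apply/lfunP => w.
by rewrite !(add_lfunE, scale_lfunE, opp_lfunE, comp_lfunE) scalerN opprD.
Qed.

Theorem theorem2p15 (K : fieldType) (Kchar0 : [pchar K] =i pred0)
  (A : vectType K) (circ : A -> A -> A) (omega : A -> A -> K) :
  is_Leibniz circ ->
  bilinear_form omega -> skew_symm_form omega -> nondeg_form omega ->
  is_2cocycle circ omega ->
  (exists succ prec : A -> A -> A,
     (forall x y z, omega (succ x y) z = omega y (circ x z)) /\
     (forall x y z, omega (prec x y) z = - omega x (circ y z + circ z y))) /\
  (forall succ prec : A -> A -> A,
     (forall x y z, omega (succ x y) z = omega y (circ x z)) ->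
     (forall x y z, omega (prec x y) z = - omega x (circ y z + circ z y)) ->
     anti_pre_Leibniz succ prec /\
         (forall x y, succ x y + prec x y = circ x y) /\
         is_rep circ (fun x => - Lmul succ x) (fun x => - Rmul prec x) /\
         is_rep circ (dualrep (Lmul circ))
                     (fun x => - dualrep (Lmul circ) x - dualrep (Rmul circ) x) /\
         equiv_via (natural omega)
                   (fun x => - Lmul succ x) (fun x => - Rmul prec x)
                   (dualrep (Lmul circ))
                   (fun x => - dualrep (Lmul circ) x - dualrep (Rmul circ) x) /\
         is_rep circ (Lmul circ) (Rmul circ) /\
         is_rep circ (fun x => - dualrep (Lmul succ) x)
                     (fun x => dualrep (Lmul succ) x + dualrep (Rmul prec) x) /\
         equiv_via (natural_dual omega)
                   (Lmul circ) (Rmul circ)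
                   (fun x => - dualrep (Lmul succ) x)
                   (fun x => dualrep (Lmul succ) x + dualrep (Rmul prec) x)).
Proof.
move=> [[cl cr] hLe] [wl wr] hs hnd hc.
have two := two0 _ Kchar0.
have w0l c : omega 0 c = 0.
  have := wl 1 0 0 c; rewrite scaler0 addr0 mul1r => h.
  by apply: (addrI (omega 0 c)); rewrite addr0 -h.
have w0r c : omega c 0 = 0.
  have := wr 1 0 0 c; rewrite scaler0 addr0 mul1r => h.
  by apply: (addrI (omega c 0)); rewrite addr0 -h.
have wDl a b c : omega (a + b) c = omega a c + omega b c.
  by have := wl 1 a b c; rewrite scale1r mul1r.
have wDr a b c : omega c (a + b) = omega c a + omega c b.
  by have := wr 1 a b c; rewrite scale1r mul1r.
have wZl k a c : omega (k *: a) c = k * omega a c.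
  by have := wl k a 0 c; rewrite !addr0 w0l addr0.
have wZr k a c : omega c (k *: a) = k * omega c a.
  by have := wr k a 0 c; rewrite !addr0 w0r addr0.
have wNl a c : omega (- a) c = - omega a c by rewrite -scaleN1r wZl mulN1r.
have wNr a c : omega c (- a) = - omega c a by rewrite -scaleN1r wZr mulN1r.
have c0l c : circ 0 c = 0.
  have := cl 1 0 0 c; rewrite scaler0 addr0 scale1r => h.
  by apply: (addrI (circ 0 c)); rewrite addr0 -h.
have c0r c : circ c 0 = 0.
  have := cr 1 0 0 c; rewrite scaler0 addr0 scale1r => h.
  by apply: (addrI (circ c 0)); rewrite addr0 -h.
have cDl a b c : circ (a + b) c = circ a c + circ b c.
  by have := cl 1 a b c; rewrite !scale1r.
have cDr a b c : circ c (a + b) = circ c a + circ c b.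
  by have := cr 1 a b c; rewrite !scale1r.
have cZl k a c : circ (k *: a) c = k *: circ a c.
  by have := cl k a 0 c; rewrite !addr0 c0l addr0.
have cZr k a c : circ c (k *: a) = k *: circ c a.
  by have := cr k a 0 c; rewrite !addr0 c0r addr0.
have cNl a c : circ (- a) c = - circ a c by rewrite -scaleN1r cZl scaleN1r.
have cNr a c : circ c (- a) = - circ c a by rewrite -scaleN1r cZr scaleN1r.
have bc : bilinear_mul circ by split.
have eqw a b : (forall c, omega a c = omega b c) -> a = b.
  move=> h; apply/eqP; rewrite -subr_eq0; apply/eqP; apply: hnd => c.
  by rewrite wDl wNl h subrr.
have an' a b c : circ (circ b a) c = - circ (circ a b) c.
  have e1 : circ (circ a b) c = circ a (circ b c) - circ b (circ a c)
    by rewrite (hLe a b c) addrK.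
  have e2 : circ (circ b a) c = circ b (circ a c) - circ a (circ b c)
    by rewrite (hLe b a c) addrK.
  by rewrite e1 e2 opprB.
have natE u z : natural omega u z = omega u z.
  rewrite /natural lfunE_gen; first by rewrite lfunE_gen // => k x y; exact: wr.
  move=> k x y; apply/lfunP => z'; rewrite add_lfunE scale_lfunE !lfunE_gen //;
    try (by move=> k' x' y'; exact: wr).
have natdE v u : natural_dual omega v u = omega u v.
  rewrite /natural_dual lfunE_gen; first by rewrite lfunE_gen // => k x y; exact: wl.
  move=> k x y; apply/lfunP => z'; rewrite add_lfunE scale_lfunE !lfunE_gen //;
    try (by move=> k' x' y'; exact: wl).
have kf : lker (natural omega) == 0%VS.
  by apply/lker0P => u v h; apply: eqw => c; rewrite -!natE h.
have imf : limg (natural omega) = fullv.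
  apply/eqP; rewrite eqEdim subvf /= limg_dim_eq; last by rewrite (eqP kf) capv0.
  by rewrite !dimvf /dual dimhom.
have finvE (g : dual A) : natural omega ((natural omega)^-1%VF g) = g.
  by rewrite limg_lfunVK // imf memvf.
have finvE' (g : dual A) z : omega ((natural omega)^-1%VF g) z = g z.
  by rewrite -natE finvE.
split.
  exists (fun x y => (natural omega)^-1%VF (linfun (fun z => omega y (circ x z) : K^o))).
  exists (fun x y => (natural omega)^-1%VF
            (linfun (fun z => - omega x (circ y z + circ z y) : K^o))).
  split=> x y z; rewrite finvE' lfunE_gen //.
    by move=> k a b; rewrite cr wr.
  move=> k a b /=; rewrite cr cl !wDr !wZr /=.
  rewrite /GRing.scale /=; ring.
move=> succ prec hsucc hprec.
have hsum x y : succ x y + prec x y = circ x y.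
  apply: eqw => c; rewrite wDl hsucc hprec (hs (circ x y) c) (hc x y c) wDr; ring.
have bs : bilinear_mul succ.
  by split=> k a b c; apply: eqw => d; rewrite !(hsucc, wDl, wZl, cl, wr).
have bp : bilinear_mul prec.
  split=> k a b c; apply: eqw => d;
    rewrite !(hprec, wDl, wZl, wNl, cDl, cDr, cZl, cZr, wDr, wZr); ring.
have al2 x y z : succ (circ x y) z = succ y (succ x z) - succ x (succ y z).
  apply: eqw => w; rewrite !(wDl, wNl, hsucc) (hLe x y w) wDr; ring.
have al3 x y z : prec x (circ y z) = prec (succ y x) z - succ y (prec x z).
  apply: eqw => w; rewrite !(wDl, wNl, hsucc, hprec, cDl, cDr, cNl, cNr, wDr, wNr).
  rewrite (hLe y z w) (hLe y w z) !wDr; ring.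
have al4 x y z : prec (succ x y) z = - prec (prec y x) z.
  apply: eqw => w; rewrite !(wDl, wNl, hsucc, hprec, cDl, cDr, cNl, cNr, wDr, wNr).
  rewrite (an' z w x) wNr; ring.
have al1 x y z : prec (circ x y) z = succ x (circ y z) - succ y (circ x z).
  apply: eqw => w; rewrite !(wDl, wNl, hsucc, hprec) !wDr.
  apply: (@close_lin _ _ _ _ (@al1_aux _ _ circ omega two hLe (fun a u v => wDr u v a) hc hs x y z w)); ring.
have [bs1 bs2] := bs.
have [bp1 bp2] := bp.
split.
  by split; [|split] => // x y z; rewrite !hsum; split.
split; first exact: hsum.
have uD (u : dual A) a b : u (a + b) = u a + u b by rewrite linearD.
have uN (u : dual A) a : u (- a) = - u a by rewrite linearN.
have uB (u : dual A) a b : u (a - b) = u a - u b by rewrite linearB.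
have uZ (u : dual A) k a : u (k *: a) = k * u a by rewrite linearZ.
have LsE := @LmulE _ _ _ bs.
have RpE := @RmulE _ _ _ bp.
have LcE := @LmulE _ _ _ bc.
have RcE := @RmulE _ _ _ bc.
split.
  split; [|split].
  - move=> k a b; apply/lfunP => v.
    by rewrite !(add_lfunE, scale_lfunE, opp_lfunE) !LsE bs1 scalerN opprD.
  - move=> k a b; apply/lfunP => v.
    by rewrite !(add_lfunE, scale_lfunE, opp_lfunE) !RpE bp2 scalerN opprD.
  - move=> x y v; rewrite !(opp_lfunE, LsE, RpE); split; apply: eqw => w;
      rewrite !(wDl, wNl, hsucc, hprec, cDl, cDr, cNl, cNr, wDr, wNr).
    + rewrite (hLe x y w) wDr; ring.
    + rewrite (hLe x y w) (hLe x w y) !wDr; ring.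
    + rewrite (an' y w x) wNr; ring.
split.
  split; [|split].
  - move=> k a b; apply/lfunP => u; apply/lfunP => v.
    rewrite !(add_lfunE, scale_lfunE, opp_lfunE, dualrepE, LcE) cl uD uZ.
    rewrite /GRing.scale /=; ring.
  - move=> k a b; apply/lfunP => u; apply/lfunP => v.
    rewrite !(add_lfunE, scale_lfunE, opp_lfunE, dualrepE, LcE, RcE) cl cr !uD !uZ.
    rewrite /GRing.scale /=; ring.
  - move=> x y u; split; apply/lfunP => v;
      rewrite !(add_lfunE, opp_lfunE, dualrepE, LcE, RcE).
    + rewrite (hLe x y v) uD; ring.
    + rewrite (hLe x y v) (hLe x v y) !uD; ring.
    + rewrite (an' y v x) uN; ring.
split.
  split.
    by exists ((natural omega)^-1%VF) => g; [exact: (lker0_lfunK kf) | exact: finvE].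
  move=> x v; split; apply/lfunP => z;
    rewrite !(add_lfunE, opp_lfunE, dualrepE, LcE, RcE, LsE, RpE, natE, wNl, hsucc, hprec, wDr); ring.
split.
  split; [|split].
  - by move=> k a b; apply/lfunP => v; rewrite !(add_lfunE, scale_lfunE, LcE) cl.
  - by move=> k a b; apply/lfunP => v; rewrite !(add_lfunE, scale_lfunE, RcE) cr.
  - move=> x y v; rewrite !(LcE, RcE); split.
    + by rewrite (hLe x y v) addrK.
    + apply: eqw => w; rewrite !(wDl, wNl) (hLe x v y) wDl; ring.
    + exact: an'.
split.
  split; [|split].
  - move=> k a b; apply/lfunP => u; apply/lfunP => v.
    rewrite !(add_lfunE, scale_lfunE, opp_lfunE, dualrepE, LsE) bs1 uD uZ.
    rewrite /GRing.scale /=; ring.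
  - move=> k a b; apply/lfunP => u; apply/lfunP => v.
    rewrite !(add_lfunE, scale_lfunE, opp_lfunE, dualrepE, LsE, RpE) bs1 bp2 !uD !uZ.
    rewrite /GRing.scale /=; ring.
  - move=> x y u; split; apply/lfunP => v;
      rewrite !(add_lfunE, opp_lfunE, dualrepE, LsE, RpE).
    + rewrite al2 uB; ring.
    + rewrite al2 al3 !uB; ring.
    + rewrite (al4 y v x) uN; ring.
split.
  exists (fun g => (natural omega)^-1%VF (- g)).
    move=> v; move/lker0P: kf => injf; apply: injf; rewrite finvE.
    by apply/lfunP => u; rewrite opp_lfunE natdE natE hs opprK.
  by move=> g; apply/lfunP => u; rewrite natdE hs finvE' opp_lfunE opprK.
move=> x v; split; apply/lfunP => u;
  rewrite !(add_lfunE, opp_lfunE, dualrepE, LcE, RcE, LsE, RpE, natdE, hsucc, hprec, wDr); ring.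
Qed.
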